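(* Let $S=\bigwedge W$. Assume $W$ is finite-dimensional with $\dim W\ge 2$, and let \[ \Lambda:\operatorname{GL}(W)\hookrightarrow \mathrm{SO}(\mathrm{Hyp}(W)) \] denote the transported Levi embedding $\Lambda(g)=(g^{-{\vee}},g)$. If $g\in \operatorname{GL}(W)$ has $\det(g)=u^2$ for some $u\in K^\times$, then, after choosing a basis $e_1,\ldots,e_n$, there are finite products $A$ and $B$ of elementary basis transvections and units $t_2,\ldots,t_n\in K^\times$ such that \[ g=A\,L_1(u^2)\,\prod_{j=2}^{n}D_{j1}(t_j)\,B. \] Here $L_1(u^2)$ scales $e_1$ by $u^2$ and fixes the other basis vectors, while $D_{j1}(t_j)$ scales $e_j$ by $t_j$, scales $e_1$ by $t_j^{-1}$, and fixes the remaining basis vectors. Applying $\Lambda$, each elementary transvection factor is a transported hyperbolic transvection and each $D_{j1}(t_j)$ is a product of four such transvections. Thus $\Lambda(g)$ is a product of transported hyperbolic transvections and one chosen-line square scaling. Moreover, the factors admit explicit Clifford representatives whose product is an even unitary Clifford unit \[ x\in \mathrm{Cl}(\mathrm{Hyp}(W))^\times, \] such that \[ \rho_S(x)=-u^{-1}(\bigwedge g) \] as endomorphisms of $S$. Consequently, $\Lambda(\operatorname{SL}(W))$ is contained in the subgroup of $\mathrm{SO}(\mathrm{Hyp}(W))$ generated by the transported hyperbolic transvections.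
   Context: $K$ is a field with $2\in K^\times$; $\mathrm{Hyp}(W)$ is the quadratic form $Q(d,u)=d(u)$ on $W^*\oplus W$, with Clifford algebra $\mathrm{Cl}(\mathrm{Hyp}(W))$ and generator map $\iota$. $\rho_S$ is the exterior-model action on $S=\bigwedge W$ ($\iota(0,w)$ acts by $w\wedge-$, $\iota(d,0)$ by contraction with $d$). $\Lambda(g)$ acts by $(d,u)\mapsto((g^\vee)^{-1}d,gu)$ with $g^\vee$ the dual map. ''Even unitary'' means $x$ lies in the even Clifford part and $x\tilde x=\tilde x x=1$ for Clifford conjugation $\tilde{\ }$. A transported hyperbolic transvection, for $\delta\in W^*$, $w\in W$ with $\delta(w)=0$, is $T_{\delta,w}(d,u)=(d+d(w)\delta,\ u-\delta(u)w)$, with Clifford representative $x_{\delta,w}=1+\iota(\delta,0)\iota(0,w)$. A chosen-line square scaling, for $w\in W$, $f\in W^*$ with $f(w)=1$ and $t\in K^\times$, is $\lambda_t(d,u)=(d+(t^{-2}-1)d(w)f,\ u+(t^2-1)f(u)w)$, with Clifford representative $\iota(-t^{-1}f,tw)\iota(-f,w)$. *)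

(* Defs.v *)
From HB Require Import structures.
From mathcomp Require Import all_boot all_order all_algebra.
Set Implicit Arguments. Unset Strict Implicit. Unset Printing Implicit Defensive.
Import Order.TTheory GRing.Theory Num.Theory.
Local Open Scope ring_scope.

(* Model: W = 'cV[K]_n (column vectors), W^* = 'rV[K]_n (row vectors),
   pairing d(u) = (d *m u) 0 0.  Hyp(W) = W^* (+) W  represented as pairs. *)

Section Hyperbolic.
Variables (K : fieldType) (n : nat).

Local Notation V := ('rV[K]_n * 'cV[K]_n)%type.

Definition pair_ev (d : 'rV[K]_n) (u : 'cV[K]_n) : K := (d *m u) 0 0.

Definition hypQ (v : V) : K := pair_ev v.1 v.2.

Definition hyp_linear (B : lmodType K) (f : V -> B) : Prop :=
  forall (a : K) (v1 v2 : V),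
    f (a *: v1.1 + v2.1, a *: v1.2 + v2.2) = a *: f v1 + f v2.

Definition alg_morph (A B : algType K) (phi : A -> B) : Prop :=
  [/\ (forall a b, phi (a + b) = phi a + phi b),
      (forall (k : K) a, phi (k *: a) = k *: phi a),
      phi 1 = 1 &
      (forall a b, phi (a * b) = phi a * phi b)].

Definition clifford_rel (A : algType K) (iota : V -> A) : Prop :=
  hyp_linear iota /\ forall v, iota v * iota v = (hypQ v)%:A.

Definition clifford_universal (A : algType K) (iota : V -> A) : Prop :=
  clifford_rel iota /\
  forall (B : algType K) (f : V -> B), clifford_rel f ->
    exists phi : A -> B,
      [/\ alg_morph phi, (forall v, phi (iota v) = f v) &
          (forall psi : A -> B, alg_morph psi -> (forall v, psi (iota v) = f v) ->
             forall a, psi a = phi a)].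

Definition clifford_conjugation (A : algType K) (iota : V -> A) (cj : A -> A) : Prop :=
  [/\ (forall a b, cj (a + b) = cj a + cj b),
      (forall (k : K) a, cj (k *: a) = k *: cj a),
      cj 1 = 1,
      (forall a b, cj (a * b) = cj b * cj a) &
      (forall v, cj (iota v) = - iota v)].

Definition clifford_even (A : algType K) (iota : V -> A) (x : A) : Prop :=
  exists s : seq (K * seq V),
    all (fun p => ~~ odd (size p.2)) s /\
    x = \sum_(p <- s) p.1 *: \prod_(v <- p.2) iota v.

Definition even_unitary (A : algType K) (iota : V -> A) (cj : A -> A) (x : A) : Prop :=
  [/\ clifford_even iota x, x * cj x = 1 & cj x * x = 1].

(* ---------- exterior model S = /\ W, basis e_I, I ⊆ {0..n-1},
   e_I = e_{i1} /\ ... /\ e_{ik} with i1 < ... < ik ---------- *)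
Local Notation ext := {ffun {set 'I_n} -> K^o}.

Definition ext_basis (I : {set 'I_n}) : ext := [ffun J => (J == I)%:R].

Definition ext_wedge (w : 'cV[K]_n) (s : ext) : ext :=
  [ffun J : {set 'I_n} => \sum_(i in J)
      (-1) ^+ #|[set k in J | (k < i)%N]| * w i 0 * s (J :\ i)].

Definition ext_contr (d : 'rV[K]_n) (s : ext) : ext :=
  [ffun J : {set 'I_n} => \sum_(i in ~: J)
      (-1) ^+ #|[set k in J | (k < i)%N]| * d 0 i * s (i |: J)].

Definition rhoS_gen (v : V) (s : ext) : ext := ext_wedge v.2 s + ext_contr v.1 s.

Definition spinor_rep (A : algType K) (iota : V -> A) (act : A -> ext -> ext) : Prop :=
  [/\ (forall s, act 1 s = s),
      (forall a b s, act (a * b) s = act a (act b s)),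
      (forall a b s, act (a + b) s = act a s + act b s),
      (forall (k : K) a s, act (k *: a) s = k *: act a s) &
      (forall a (k : K) s1 s2, act a (k *: s1 + s2) = k *: act a s1 + act a s2)] /\
  (forall v s, act (iota v) s = rhoS_gen v s).

Definition ext_power (g : 'M[K]_n) (s : ext) : ext :=
  \sum_(I : {set 'I_n})
     s I *: foldr (fun i acc => ext_wedge (col i g) acc) (ext_basis set0) (enum I).

Definition Levi (g : 'M[K]_n) (v : V) : V := (v.1 *m invmx g, g *m v.2).

Definition hyp_transv (dl : 'rV[K]_n) (w : 'cV[K]_n) (v : V) : V :=
  (v.1 + pair_ev v.1 w *: dl, v.2 - pair_ev dl v.2 *: w).

Definition sq_scaling (w : 'cV[K]_n) (f : 'rV[K]_n) (t : K) (v : V) : V :=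
  (v.1 + ((t ^- 2 - 1) * pair_ev v.1 w) *: f,
   v.2 + ((t ^+ 2 - 1) * pair_ev f v.2) *: w).

Inductive hyp_factor :=
| HTransv of 'rV[K]_n & 'cV[K]_n
| HScale of 'cV[K]_n & 'rV[K]_n & K.

Definition factor_valid (F : hyp_factor) : Prop :=
  match F with
  | HTransv dl w => pair_ev dl w = 0
  | HScale w f t => pair_ev f w = 1 /\ t != 0
  end.

Definition is_scale (F : hyp_factor) : bool :=
  if F is HScale _ _ _ then true else false.

Definition factor_map (F : hyp_factor) : V -> V :=
  match F with
  | HTransv dl w => hyp_transv dl w
  | HScale w f t => sq_scaling w f t
  end.

Definition factors_map (fs : seq hyp_factor) : V -> V :=
  foldr (fun F h => factor_map F \o h) id fs.

Definition factor_rep (A : algType K) (iota : V -> A) (F : hyp_factor) : A :=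
  match F with
  | HTransv dl w => 1 + iota (dl, 0) * iota (0, w)
  | HScale w f t => iota (- (t^-1 *: f), t *: w) * iota (- f, w)
  end.

Definition factors_rep (A : algType K) (iota : V -> A) (fs : seq hyp_factor) : A :=
  \prod_(F <- fs) factor_rep iota F.

Inductive gen_by_transv : (V -> V) -> Prop :=
| gbt_id : gen_by_transv id
| gbt_transv dl w : pair_ev dl w = 0 -> gen_by_transv (hyp_transv dl w)
| gbt_comp f h : gen_by_transv f -> gen_by_transv h -> gen_by_transv (f \o h)
| gbt_inv f h : gen_by_transv f -> cancel f h -> cancel h f -> gen_by_transv h.

(* ---------- matrices relative to a basis: columns of P are e_1..e_n ---------- *)
Definition in_basis (P M : 'M[K]_n) : 'M[K]_n := P *m M *m invmx P.

Definition elem_transv (P : 'M[K]_n) (i j : 'I_n) (a : K) : 'M[K]_n :=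
  in_basis P (1%:M + a *: delta_mx i j).

Definition elem_prod (P : 'M[K]_n) (s : seq ('I_n * 'I_n * K)) : 'M[K]_n :=
  foldr (fun p M => elem_transv P p.1.1 p.1.2 p.2 *m M) 1%:M s.

Definition elem_valid (s : seq ('I_n * 'I_n * K)) : bool :=
  all (fun p => p.1.1 != p.1.2) s.

Definition line_scale (P : 'M[K]_n) (i1 : 'I_n) (c : K) : 'M[K]_n :=
  in_basis P (1%:M + (c - 1) *: delta_mx i1 i1).

Definition diag_pair (P : 'M[K]_n) (i1 j : 'I_n) (t : K) : 'M[K]_n :=
  in_basis P (1%:M + (t - 1) *: delta_mx j j + (t^-1 - 1) *: delta_mx i1 i1).

Definition diag_prod (P : 'M[K]_n) (i1 : 'I_n) (t : 'I_n -> K) : 'M[K]_n :=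
  foldr (fun j M => diag_pair P i1 j (t j) *m M) 1%:M [seq j <- enum 'I_n | j != i1].

End Hyperbolic.

Definition all_factors_valid (K : fieldType) (n : nat) (fs : seq (hyp_factor K n)) : Prop :=
  foldr (fun F Pr => factor_valid F /\ Pr) True fs.

(* Main.v *)
Require Import Defs.
From HB Require Import structures.
From mathcomp Require Import all_boot all_order all_algebra.
From mathcomp Require Import zify ring.
From Stdlib Require Import FunctionalExtensionality.
Import Order.TTheory GRing.Theory Num.Theory.
Local Open Scope ring_scope.
Set Implicit Arguments. Unset Strict Implicit. Unset Printing Implicit Defensive.

Section Mat.
Variables (K : fieldType) (n : nat).
Local Notation M := ('M[K]_n.+1).

Lemma inv_uniq (A X : M) : A *m X = 1%:M -> invmx A = X.
Proof.
move=> h; have [uA _] := mulmx1_unit h.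
by rewrite -[invmx A]mulmx1 -h mulmxA mulVmx // mul1mx.
Qed.

Lemma invmxM (A B : M) : A \in unitmx -> B \in unitmx ->
  invmx (A *m B) = invmx B *m invmx A.
Proof.
move=> uA uB; apply: inv_uniq.
by rewrite mulmxA -(mulmxA A) mulmxV // mulmx1 mulmxV.
Qed.

Lemma LeviM (A B : M) : A \in unitmx -> B \in unitmx ->
  forall v, Levi (A *m B) v = Levi A (Levi B v).
Proof. by move=> uA uB [d u]; rewrite /Levi /= invmxM // !mulmxA. Qed.

Lemma pair_evZl a (d : 'rV[K]_n.+1) u : pair_ev (a *: d) u = a * pair_ev d u.
Proof. by rewrite /pair_ev -scalemxAl mxE. Qed.
Lemma pair_evZr a (d : 'rV[K]_n.+1) u : pair_ev d (a *: u) = a * pair_ev d u.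
Proof. by rewrite /pair_ev -scalemxAr mxE. Qed.
Lemma pair_evDl (d1 d2 : 'rV[K]_n.+1) u : pair_ev (d1 + d2) u = pair_ev d1 u + pair_ev d2 u.
Proof. by rewrite /pair_ev mulmxDl mxE. Qed.
Lemma pair_evDr (d : 'rV[K]_n.+1) u1 u2 : pair_ev d (u1 + u2) = pair_ev d u1 + pair_ev d u2.
Proof. by rewrite /pair_ev mulmxDr mxE. Qed.
Lemma pair_evNl (d : 'rV[K]_n.+1) u : pair_ev (- d) u = - pair_ev d u.
Proof. by rewrite /pair_ev mulNmx mxE. Qed.
Lemma pair_evNr (d : 'rV[K]_n.+1) u : pair_ev d (- u) = - pair_ev d u.
Proof. by rewrite /pair_ev mulmxN mxE. Qed.
Lemma pair_ev0l (u : 'cV[K]_n.+1) : pair_ev 0 u = 0.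
Proof. by rewrite /pair_ev mul0mx mxE. Qed.
Lemma pair_ev0r (d : 'rV[K]_n.+1) : pair_ev d 0 = 0.
Proof. by rewrite /pair_ev mulmx0 mxE. Qed.

Lemma rowcol (d : 'rV[K]_n.+1) (w : 'cV[K]_n.+1) (f : 'rV[K]_n.+1) :
  d *m (w *m f) = pair_ev d w *: f.
Proof. by rewrite mulmxA [d *m w]mx11_scalar mul_scalar_mx. Qed.
Lemma colrow (w : 'cV[K]_n.+1) (f : 'rV[K]_n.+1) u :
  (w *m f) *m u = pair_ev f u *: w.
Proof. by rewrite -mulmxA [f *m u]mx11_scalar mul_mx_scalar. Qed.

Lemma r1_mul (w : 'cV[K]_n.+1) (f : 'rV[K]_n.+1) a b :
  (1%:M + a *: (w *m f)) *m (1%:M + b *: (w *m f)) =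
  1%:M + (a + b + a * b * pair_ev f w) *: (w *m f) :> M.
Proof.
rewrite mulmxDl !mulmxDr !mul1mx mulmx1 -!scalemxAl -!scalemxAr.
rewrite -[(w *m f) *m (w *m f)]mulmxA rowcol scalemxAr !scalerA !scalerDl.
rewrite -!scalemxAr !scalerA -!addrA; congr (_ + _).
by rewrite addrCA.
Qed.

Lemma Levi_r1 (w : 'cV[K]_n.+1) (f : 'rV[K]_n.+1) a b v :
  (1%:M + a *: (w *m f)) *m (1%:M + b *: (w *m f)) = 1%:M :> M ->
  Levi (1%:M + a *: (w *m f)) v =
  (v.1 + (b * pair_ev v.1 w) *: f, v.2 + (a * pair_ev f v.2) *: w).
Proof.
move=> h; rewrite /Levi (inv_uniq h) mulmxDr mulmx1 -scalemxAr rowcol.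
by rewrite mulmxDl mul1mx -scalemxAl colrow !scalerA.
Qed.

End Mat.

Section Elim.
Variables (K : fieldType) (n : nat).
Local Notation M := ('M[K]_n.+1).
Local Notation I := ('I_n.+1).

Definition tr (i j : I) (a : K) : M := 1%:M + a *: delta_mx i j.
Definition trs (s : seq (I * I * K)) : M :=
  foldr (fun p N => tr p.1.1 p.1.2 p.2 *m N) 1%:M s.
Definition Gm (E : M) := exists s, elem_valid s /\ E = trs s.
Definition Dg (c : K) : M := 1%:M + (c - 1) *: delta_mx ord0 ord0.

Lemma trs_cat s1 s2 : trs (s1 ++ s2) = trs s1 *m trs s2.
Proof. elim: s1 => [|p s IH] /=; first by rewrite mul1mx. by rewrite IH mulmxA. Qed.

Lemma Gm1 : Gm 1%:M. Proof. by exists [::]. Qed.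
Lemma GmM E1 E2 : Gm E1 -> Gm E2 -> Gm (E1 *m E2).
Proof.
move=> [s1 [v1 ->]] [s2 [v2 ->]]; exists (s1 ++ s2); split; last by rewrite trs_cat.
by rewrite /elem_valid all_cat; apply/andP.
Qed.
Lemma Gm_tr i j a : i != j -> Gm (tr i j a).
Proof. by move=> ij; exists [:: (i, j, a)]; rewrite /elem_valid /= andbT mulmx1. Qed.

Lemma trE (a b : I) x (N : M) i j :
  (tr a b x *m N) i j = N i j + (if i == a then x * N b j else 0).
Proof.
rewrite mulmxDl mul1mx -scalemxAl [LHS]mxE [X in _ + X]mxE; congr (_ + _).
rewrite mxE (bigD1 b) //= big1 ?addr0 => [|k /negbTE kb]; last by rewrite mxE kb andbF mul0r.
rewrite mxE eqxx andbT; case: (i == a); by rewrite ?mul1r ?mul0r ?mulr0.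
Qed.

Lemma tr_inv a k y : a != k -> tr a k y *m tr a k (- y) = 1%:M.
Proof.
move=> ak; rewrite /tr mulmxDl !mulmxDr !mul1mx mulmx1 -scalemxAl -scalemxAr.
rewrite mul_delta_mx_0 1?eq_sym // !scaler0 addr0 scaleNr.
by rewrite subrK.
Qed.
Lemma tr_inv' a k y : a != k -> tr a k (- y) *m tr a k y = 1%:M.
Proof. by move=> ak; rewrite -{2}(opprK y) tr_inv. Qed.

Lemma det_one (B : M) : is_trig_mx B -> (forall i, B i i = 1) -> \det B = 1.
Proof. by move=> tB hB; rewrite det_trig // big1. Qed.

Lemma det_trv a b x : a != b -> \det (tr a b x) = 1.
Proof.
move=> ab.
have dg i : tr a b x i i = 1.
  rewrite !mxE eqxx /=; have -> : (i == a) && (i == b) = false.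
    by apply/negbTE/andP => [[/eqP e1 /eqP e2]]; rewrite -e1 -e2 eqxx in ab.
  by rewrite mulr0 addr0.
case: (ltngtP a b) => [lt|gt|/val_inj e]; last by rewrite e eqxx in ab.
- rewrite -det_tr; apply: det_one => [|i]; last by rewrite mxE dg.
  apply/is_trig_mxP => i j ij; rewrite !mxE.
  have -> : (j == a) && (i == b) = false.
    by apply/negbTE/andP => [[/eqP e1 /eqP e2]]; move: lt; rewrite -e1 -e2 ltnNge ltnW.
  by rewrite (_ : (j == i) = false) ?mulr0 ?addr0 //; apply/negbTE/eqP => e; rewrite e ltnn in ij.
- apply: det_one => //; apply/is_trig_mxP => i j ij; rewrite !mxE.
  have -> : (i == a) && (j == b) = false.
    by apply/negbTE/andP => [[/eqP e1 /eqP e2]]; move: gt; rewrite -e1 -e2 ltnNge ltnW.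
  by rewrite (_ : (i == j) = false) ?mulr0 ?addr0 //; apply/negbTE/eqP => e; rewrite e ltnn in ij.
Qed.

Lemma det_trs s : elem_valid s -> \det (trs s) = 1.
Proof.
elim: s => [|p s IH] /=; first by rewrite det1.
by case/andP => h1 h2; rewrite det_mulmx det_trv // IH // mulr1.
Qed.

Lemma det_Dg c : \det (Dg c) = c.
Proof.
rewrite det_trig; last first.
  apply/is_trig_mxP => i j ij; rewrite !mxE.
  rewrite (_ : (i == j) = false); last by apply/negbTE/eqP => e; rewrite e ltnn in ij.
  rewrite (_ : (i == ord0) && (j == ord0) = false) ?mulr0 ?addr0 //.
  by apply/negbTE/andP => [[/eqP e1 /eqP e2]]; rewrite e1 e2 ltnn in ij.
rewrite big_ord_recl big1 ?mulr1; first by rewrite !mxE eqxx /= mulr1 addrC subrK.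
by move=> i _; rewrite !mxE eqxx /= mulr0 addr0.
Qed.

Definition Hc (k : nat) (N : M) := forall i j : I, (k < j)%N -> N i j = (i == j)%:R.

Lemma pivot (N : M) (p : I) : N \in unitmx -> Hc p N ->
  exists2 b : I, (b <= p)%N & N b p != 0.
Proof.
move=> uN hN.
have [b /andP [bp nz]|h0] := pickP [pred b : I | (b <= p)%N && (N b p != 0)].
  by exists b.
have z (b : I) : (b <= p)%N -> N b p = 0.
  by move=> bp; have := h0 b; rewrite /= bp /= => /negbFE/eqP.
set x : 'cV[K]_n.+1 := \col_j (if j == p then 1 else if (p < j)%N then - N j p else 0).
have Nx : N *m x = 0.
  apply/matrixP => i k; rewrite !mxE (bigD1 p) //= mxE eqxx mulr1.
  rewrite (eq_bigr (fun j : I => if (p < j)%N then - ((i == j)%:R * N j p) else 0)); last first.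
    move=> j jp; rewrite mxE (negbTE jp); case: ifP => pj; last by rewrite mulr0.
    by rewrite hN // mulrN.
  case: (leqP i p) => ip.
    rewrite z // add0r big1 // => j jp; case: ifP => // pj.
    rewrite (_ : (i == j) = false) ?mul0r ?oppr0 //.
    by apply/negbTE/eqP => e; rewrite e leqNgt pj in ip.
  have ipn : i != p by apply/eqP => e; rewrite e ltnn in ip.
  rewrite (bigD1 i) //= ip eqxx mul1r big1 ?addr0 ?addrN // => j /andP [jp ji].
  by case: ifP => // _; rewrite eq_sym (negbTE ji) mul0r oppr0.
have : x = 0 by rewrite -(mulKmx uN x) Nx mulmx0.
by move/matrixP/(_ p 0); rewrite !mxE eqxx => /eqP; rewrite oner_eq0.
Qed.


Lemma clear_gen (N : M) (k : I) (l : seq I) : N k k != 0 ->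
  exists E, exists N', [/\ Gm E, N = E *m N' &
   forall i j, N' i j = if (i \in l) && (i != k)
                        then N i j - N i k / N k k * N k j else N i j].
Proof.
move=> nz; elim: l => [|a l [E [N' [gE eN hN']]]].
  exists 1%:M, N; split; [exact: Gm1 | by rewrite mul1mx | by move=> i j; rewrite in_nil].
case: (boolP ((a \in l) || (a == k))) => al.
  exists E, N'; split => // i j; rewrite hN' in_cons.
  case: (eqVneq i a) => [->|ia] //=.
  by case/orP: al => [->|/eqP->]; rewrite ?eqxx ?andbF.
move: al; rewrite negb_or => /andP [al ak].
set b := N a k / N k k.
exists (E *m tr a k b), (tr a k (- b) *m N'); split.
- by apply: GmM gE (Gm_tr _ _).
- by rewrite -mulmxA (mulmxA (tr _ _ _)) tr_inv // mul1mx.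
move=> i j; rewrite trE !hN' in_cons eqxx andbF.
case: (eqVneq i a) => [->|ia] /=; last by rewrite addr0.
by rewrite (negbTE al) ak /= mulNr.
Qed.

Lemma clear (N : M) (k : I) : N k k != 0 ->
  exists E, exists N', [/\ Gm E, N = E *m N' &
   forall i j, N' i j = if i != k then N i j - N i k / N k k * N k j else N i j].
Proof.
move=> nz; have [E [N' [gE eN hN]]] := clear_gen (enum I) nz.
by exists E, N'; split => // i j; rewrite hN mem_enum.
Qed.

Lemma to_one (N : M) (p b : I) : Hc p N -> (b <= p)%N -> b != p -> N b p != 0 ->
  exists E, exists N', [/\ Gm E, N = E *m N', Hc p N' & N' p p = 1].
Proof.
move=> hN bp neq nz; set x := (1 - N p p) / N b p.
exists (tr p b (- x)), (tr p b x *m N); split.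
- by apply: Gm_tr; rewrite eq_sym.
- by rewrite mulmxA tr_inv' ?mul1mx // eq_sym.
- move=> i j pj; rewrite trE hN // (hN b) //.
  rewrite (_ : (b == j) = false) ?mulr0; first by case: ifP; rewrite addr0.
  by apply/negbTE/eqP => e; move: pj; rewrite -e ltnNge bp.
- by rewrite trE eqxx /x divfK // addrC subrK.
Qed.

Lemma step (N : M) (p : I) : N \in unitmx -> (0 < p)%N -> Hc p N ->
  exists E, exists N', [/\ Gm E, N = E *m N', N' \in unitmx & Hc p.-1 N'].
Proof.
move=> uN p0 hN.
have [E1 [N1 [g1 e1 h1 one1]]] :
    exists E, exists N', [/\ Gm E, N = E *m N', Hc p N' & N' p p = 1].
  have [b bp nz] := pivot uN hN.
  case: (eqVneq b p) => [ebp|nbp]; last exact: to_one hN bp nbp nz.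
  rewrite ebp in nz.
  set o : I := ord0.
  have op : o != p by apply/eqP => e; rewrite -e in p0.
  set x := (1 - N o p) / N p p.
  set N0 := tr o p x *m N.
  have h0 : Hc p N0.
    move=> i j pj; rewrite /N0 trE hN // (hN p) //.
    rewrite (_ : (p == j) = false) ?mulr0; first by case: ifP; rewrite addr0.
    by apply/negbTE/eqP => e; move: pj; rewrite -e ltnn.
  have o1 : N0 o p = 1 by rewrite /N0 trE eqxx /x divfK // addrC subrK.
  have o1' : N0 o p != 0 by rewrite o1 oner_eq0.
  have [E [N' [gE eE hE oE]]] := to_one (b := o) h0 (leq0n p) op o1'.
  exists (tr o p (- x) *m E), N'; split => //.
    by apply: GmM => //; exact: Gm_tr.
  by rewrite -mulmxA -eE /N0 mulmxA tr_inv' // mul1mx.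
have nz1 : N1 p p != 0 by rewrite one1 oner_eq0.
have [E2 [N2 [g2 e2 h2]]] := clear nz1.
exists (E1 *m E2), N2; split.
- exact: GmM.
- by rewrite e1 e2 mulmxA.
- by move: uN; rewrite e1 e2 mulmxA unitmx_mul => /andP [_ ->].
move=> i j pj; rewrite h2; case: (ltnP p j) => [pj'|jp].
  rewrite (h1 p j pj') (_ : (p == j) = false) ?mulr0 ?subr0; first by case: ifP => _; apply: h1.
  by apply/negbTE/eqP => e; move: pj'; rewrite -e ltnn.
have ej : j = p by apply/val_inj => /=; lia.
rewrite ej one1 divr1 mulr1 subrr.
by case: (eqVneq i p) => [->|ip] /=; rewrite ?eqxx // (negbTE ip).
Qed.

Lemma elim_all k : (k <= n)%N -> forall N : M, N \in unitmx -> Hc k N ->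
  exists E, exists c, Gm E /\ N = E *m Dg c.
Proof.
elim: k => [_|k IH kn] N uN hN.
  have [b b0 nz] := pivot (p := ord0) uN hN.
  have eb : b = ord0 by apply/val_inj; move: b0; rewrite leqn0 => /eqP.
  rewrite eb in nz.
  have [E [N' [gE eE hE]]] := clear nz.
  exists E, (N ord0 ord0); split => //; rewrite {1}eE; congr (_ *m _).
  apply/matrixP => i j; rewrite hE !mxE.
  case: (eqVneq j ord0) => [->|j0].
    case: (eqVneq i ord0) => [->|i0] /=; first by rewrite mulr1 addrC subrK.
    by rewrite divfK // subrr mulr0 addr0.
  have j0' : (0 < j)%N by rewrite lt0n.
  rewrite (hN ord0 j j0') (_ : (ord0 == j) = false); last by rewrite eq_sym; apply/negbTE.
  rewrite mulr0 subr0 andbF mulr0 addr0.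
  by case: ifP => _; apply: hN.
have kn' : (k.+1 < n.+1)%N by rewrite ltnS.
have [E [N' [gE eE uN' hN']]] := step (p := Ordinal kn') uN (isT : (0 < k.+1)%N) hN.
have [E2 [c [g2 e2]]] := IH (ltnW kn) N' uN' hN'.
by exists (E *m E2), c; split; [exact: GmM | rewrite eE e2 mulmxA].
Qed.

Lemma factor (N : M) : N \in unitmx ->
  exists s, elem_valid s /\ N = trs s *m Dg (\det N).
Proof.
move=> uN.
have hN : Hc n N by move=> i j; rewrite ltnNge -ltnS ltn_ord.
have [E [c [[s [vs eE]] e]]] := elim_all (leqnn n) uN hN.
by exists s; split => //; rewrite e eE det_mulmx det_trs // det_Dg mul1r.
Qed.

End Elim.

Section Cliff.
Variables (K : fieldType) (n : nat) (A : algType K)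
  (iota : 'rV[K]_n * 'cV[K]_n -> A) (hrel : clifford_rel iota).

Lemma pev0l (u : 'cV[K]_n) : pair_ev 0 u = 0.
Proof. by rewrite /pair_ev mul0mx mxE. Qed.
Lemma pev0r (d : 'rV[K]_n) : pair_ev d 0 = 0.
Proof. by rewrite /pair_ev mulmx0 mxE. Qed.
Lemma pevZl a (d : 'rV[K]_n) u : pair_ev (a *: d) u = a * pair_ev d u.
Proof. by rewrite /pair_ev -scalemxAl mxE. Qed.
Lemma pevZr a (d : 'rV[K]_n) u : pair_ev d (a *: u) = a * pair_ev d u.
Proof. by rewrite /pair_ev -scalemxAr mxE. Qed.
Lemma pevDl (d1 d2 : 'rV[K]_n) u : pair_ev (d1 + d2) u = pair_ev d1 u + pair_ev d2 u.
Proof. by rewrite /pair_ev mulmxDl mxE. Qed.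
Lemma pevDr (d : 'rV[K]_n) u1 u2 : pair_ev d (u1 + u2) = pair_ev d u1 + pair_ev d u2.
Proof. by rewrite /pair_ev mulmxDr mxE. Qed.
Lemma pevNl (d : 'rV[K]_n) u : pair_ev (- d) u = - pair_ev d u.
Proof. by rewrite /pair_ev mulNmx mxE. Qed.
Lemma pevNr (d : 'rV[K]_n) u : pair_ev d (- u) = - pair_ev d u.
Proof. by rewrite /pair_ev mulmxN mxE. Qed.
Lemma pevBr (d : 'rV[K]_n) u1 u2 : pair_ev d (u1 - u2) = pair_ev d u1 - pair_ev d u2.
Proof. by rewrite pevDr pevNr. Qed.

Lemma iota_lin a v1 v2 :
  iota (a *: v1.1 + v2.1, a *: v1.2 + v2.2) = a *: iota v1 + iota v2.
Proof. by case: hrel => h _; apply: h. Qed.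
Lemma iota_sq v : iota v * iota v = (hypQ v)%:A.
Proof. by case: hrel. Qed.

Lemma iota00 : iota (0, 0) = 0.
Proof.
have := iota_lin 1 (0, 0) (0, 0); rewrite /= !scaler0 !addr0 scale1r.
by move=> /(congr1 (fun y => y - iota (0, 0))); rewrite subrr addrK => <-.
Qed.
Lemma iotaD d1 u1 d2 u2 : iota (d1 + d2, u1 + u2) = iota (d1, u1) + iota (d2, u2).
Proof. by have := iota_lin 1 (d1, u1) (d2, u2); rewrite /= !scale1r. Qed.
Lemma iotaZ a d u : iota (a *: d, a *: u) = a *: iota (d, u).
Proof. by have := iota_lin a (d, u) (0, 0); rewrite /= !addr0 iota00 addr0. Qed.
Lemma iotaN d u : iota (- d, - u) = - iota (d, u).
Proof. by rewrite -(scaleN1r (iota (d, u))) -iotaZ !scaleN1r. Qed.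
Lemma iotaB d1 u1 d2 u2 : iota (d1 - d2, u1 - u2) = iota (d1, u1) - iota (d2, u2).
Proof. by rewrite iotaD iotaN. Qed.
Lemma iota_split d u : iota (d, u) = iota (d, 0) + iota (0, u).
Proof. by rewrite -iotaD addr0 add0r. Qed.
Lemma iota0D u1 u2 : iota (0, u1 + u2) = iota (0, u1) + iota (0, u2).
Proof. by rewrite -iotaD addr0. Qed.
Lemma iota0Z a u : iota (0, a *: u) = a *: iota (0, u).
Proof. by rewrite -iotaZ scaler0. Qed.

Lemma polar a b : iota a * iota b + iota b * iota a =
  (pair_ev a.1 b.2 + pair_ev b.1 a.2)%:A.
Proof.
case: a => d1 u1; case: b => d2 u2 /=.
have h := iota_sq (d1 + d2, u1 + u2).
rewrite iotaD mulrDl !mulrDr !iota_sq /hypQ /= !pevDl !pevDr !scalerDl in h.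
move: h; rewrite -!addrA => /addrI; rewrite !addrA => /addIr.
by rewrite scalerDl.
Qed.

Lemma sq0w w : iota (0, w) * iota (0, w) = 0.
Proof. by rewrite iota_sq /hypQ /= pev0l scale0r. Qed.
Lemma sqd0 d : iota (d, 0) * iota (d, 0) = 0.
Proof. by rewrite iota_sq /hypQ /= pev0r scale0r. Qed.
Lemma anti_dw d w : iota (d, 0) * iota (0, w) + iota (0, w) * iota (d, 0) =
  (pair_ev d w)%:A.
Proof. by rewrite polar /= pev0l addr0. Qed.
Lemma anti_ww v w : iota (0, v) * iota (0, w) + iota (0, w) * iota (0, v) = 0.
Proof. by rewrite polar /= !pev0l addr0 scale0r. Qed.

Lemma comm_of (x y : A) k : x * y + y * x = k -> x * y = k - y * x.
Proof. by move=> <-; rewrite addrK. Qed.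

Lemma transv_intertw dl w v : pair_ev dl w = 0 ->
  (1 + iota (dl, 0) * iota (0, w)) * iota (0, v) =
  iota (0, v - pair_ev dl v *: w) * (1 + iota (dl, 0) * iota (0, w)).
Proof.
move=> h0.
set a := iota (dl, 0); set b := iota (0, w); set c := iota (0, v).
have bc : b * c = - (c * b) by rewrite (comm_of (anti_ww w v)) sub0r.
have ac : a * c = (pair_ev dl v)%:A - c * a by rewrite (comm_of (anti_dw dl v)).
have ba : b * a = - (a * b).
  by have := anti_dw dl w; rewrite addrC => /comm_of ->; rewrite h0 scale0r sub0r.
have bab : b * a * b = 0 by rewrite ba mulNr -mulrA sq0w mulr0 oppr0.
rewrite -/c iota0D -scaleNr iota0Z -/b.
rewrite mulrDl mul1r -mulrA bc mulrN mulrA ac mulrBl -mulrA mulr_algl.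
rewrite -/c mulrDl !mulrDr !mulr1 -scalerAl !mulrA bab scaler0 addr0.
by rewrite opprB scaleNr addrA.
Qed.


Lemma refl p z : hypQ p = -1 ->
  iota p * iota z =
  iota (- (pair_ev p.1 z.2 + pair_ev z.1 p.2) *: p.1 - z.1,
        - (pair_ev p.1 z.2 + pair_ev z.1 p.2) *: p.2 - z.2) * iota p.
Proof.
case: p => d u; case: z => d' u' /= hp.
rewrite iotaB iotaZ mulrBl -scalerAl iota_sq hp scaleN1r scalerN scaleNr opprK.
by rewrite (comm_of (polar (d, u) (d', u'))).
Qed.

Lemma scale_intertw w f t v : pair_ev f w = 1 -> t != 0 ->
  iota (- (t^-1 *: f), t *: w) * iota (- f, w) * iota (0, v) =
  iota (sq_scaling w f t (0, v)) * (iota (- (t^-1 *: f), t *: w) * iota (- f, w)).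
Proof.
move=> fw t0.
have Qq : hypQ (- f, w) = -1 by rewrite /hypQ /= pevNl fw.
have Qp : hypQ (- (t^-1 *: f), t *: w) = -1.
  by rewrite /hypQ /= pevNl pevZl pevZr fw mulr1 mulVf.
rewrite -mulrA (refl _ Qq) mulrA (refl _ Qp) -mulrA /=.
congr (iota _ * _).
rewrite /sq_scaling /=.
rewrite !(pevNl, pevNr, pevZl, pevZr, pevDl, pevDr, pev0l, pev0r, fw).
congr (_, _); apply/matrixP => i j; rewrite !mxE; field; exact: t0.
Qed.

Lemma scale_fst (w : 'cV[K]_n) f t v : (sq_scaling w f t (0, v)).1 = 0.
Proof. by rewrite /sq_scaling /= pev0l mulr0 scale0r addr0. Qed.
Lemma transv_fst (dl : 'rV[K]_n) w v : (hyp_transv dl w (0, v)).1 = 0.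
Proof. by rewrite /hyp_transv /= pev0l scale0r addr0. Qed.

End Cliff.

Section Conj.
Variables (K : fieldType) (n : nat) (A : algType K)
  (iota : 'rV[K]_n * 'cV[K]_n -> A) (hrel : clifford_rel iota)
  (cj : A -> A) (hcj : clifford_conjugation iota cj).

Lemma cjD a b : cj (a + b) = cj a + cj b. Proof. by case: hcj. Qed.
Lemma cj1 : cj 1 = 1. Proof. by case: hcj. Qed.
Lemma cjM a b : cj (a * b) = cj b * cj a. Proof. by case: hcj. Qed.
Lemma cjI v : cj (iota v) = - iota v. Proof. by case: hcj. Qed.

Definition unit2 (x : A) := x * cj x = 1 /\ cj x * x = 1.

Lemma unit2M x y : unit2 x -> unit2 y -> unit2 (x * y).
Proof.
move=> [h1 h2] [h3 h4]; split; rewrite cjM.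
  by rewrite -mulrA (mulrA y) h3 mul1r h1.
by rewrite -mulrA (mulrA (cj x)) h2 mul1r h4.
Qed.

Lemma unit2_transv dl w : pair_ev dl w = 0 ->
  unit2 (1 + iota (dl, 0) * iota (0, w)).
Proof.
move=> h0; set a := iota (dl, 0); set b := iota (0, w).
have ab_ba : a * b + b * a = 0 by rewrite anti_dw // h0 scale0r.
rewrite /unit2; have -> : cj (1 + a * b) = 1 + b * a by rewrite cjD cj1 cjM !cjI mulrNN.
have ba_ab : b * a + a * b = 0 by rewrite addrC.
split.
  rewrite mulrDl !mulrDr !mul1r mulr1 !mulrA -(mulrA a b b) sq0w // mulr0 mul0r addr0.
  by rewrite -addrA ba_ab addr0.
rewrite mulrDl !mulrDr !mul1r mulr1 !mulrA -(mulrA b a a) sqd0 // mulr0 mul0r addr0.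
by rewrite -addrA ab_ba addr0.
Qed.

Lemma unit2_refl p q : hypQ p = -1 -> hypQ q = -1 -> unit2 (iota p * iota q).
Proof.
move=> hp hq; rewrite /unit2; have -> : cj (iota p * iota q) = iota q * iota p by rewrite cjM !cjI mulrNN.
split.
  by rewrite -mulrA (mulrA (iota q)) iota_sq // hq scaleN1r mulN1r mulrN iota_sq // hp scaleN1r opprK.
by rewrite -mulrA (mulrA (iota p)) iota_sq // hp scaleN1r mulN1r mulrN iota_sq // hq scaleN1r opprK.
Qed.

Lemma even1 : clifford_even iota 1.
Proof. by exists [:: (1, [::])]; rewrite big_cons big_nil big_nil scale1r addr0. Qed.

Lemma evenM x y : clifford_even iota x -> clifford_even iota y ->
  clifford_even iota (x * y).
Proof.
move=> [s [es ->]] [s' [es' ->]].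
exists [seq (p.1 * p'.1, p.2 ++ p'.2) | p <- s, p' <- s']; split.
  apply/all_allpairsP => p p' ps ps' /=; rewrite size_cat oddD.
  by rewrite (negbTE (allP es _ ps)) (negbTE (allP es' _ ps')).
rewrite big_allpairs_dep /= mulr_suml; apply: eq_bigr => p _.
rewrite mulr_sumr; apply: eq_bigr => p' _.
by rewrite big_cat /= -scalerAl -scalerAr scalerA.
Qed.

Lemma even_transv dl w : clifford_even iota (1 + iota (dl, 0) * iota (0, w)).
Proof.
exists [:: (1, [::]); (1, [:: (dl, 0); (0, w)])]; split => //.
by rewrite !big_cons !big_nil !scale1r mulr1 addr0.
Qed.

Lemma even_refl p q : clifford_even iota (iota p * iota q).
Proof.
exists [:: (1, [:: p; q])]; split => //.
by rewrite !big_cons !big_nil !scale1r mulr1 addr0.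
Qed.

End Conj.

Section Ext.
Variables (K : fieldType) (n : nat).
Local Notation ext := {ffun {set 'I_n} -> K^o}.
Local Notation one := (ext_basis K (set0 : {set 'I_n})).

Lemma scK (x y : K^o) : x *: y = x * y. Proof. by []. Qed.

Lemma ext_contr0 (s : ext) : ext_contr 0 s = 0.
Proof. by apply/ffunP => J; rewrite !ffunE big1 // => i _; rewrite mxE mulr0 mul0r. Qed.
Lemma ext_wedge0 (s : ext) : ext_wedge 0 s = 0.
Proof. by apply/ffunP => J; rewrite !ffunE big1 // => i _; rewrite mxE mulr0 mul0r. Qed.
Lemma ext_contr_one (d : 'rV[K]_n) : ext_contr d one = 0.
Proof.
apply/ffunP => J; rewrite !ffunE big1 // => i _; rewrite ffunE.
rewrite (_ : (i |: J == set0) = false) ?mulr0 //.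
by apply/negbTE/set0Pn; exists i; exact: setU11.
Qed.
Lemma ext_wedgeZ (w : 'cV[K]_n) c (s : ext) : ext_wedge w (c *: s) = c *: ext_wedge w s.
Proof.
apply/ffunP => J; rewrite !ffunE scaler_sumr; apply: eq_bigr => i _.
by rewrite ffunE scalerAr.
Qed.

Lemma ext_decomp (s : ext) : s = \sum_I s I *: ext_basis K I.
Proof.
apply/ffunP => J; rewrite sum_ffunE (bigD1 J) //= big1 => [|I IJ].
  by rewrite !ffunE; case: eqP => // _; rewrite addr0 scK mulr1.
rewrite !ffunE; case: eqP => [e|_]; last by rewrite scK mulr0.
by rewrite e eqxx in IJ.
Qed.

Lemma wedge_basis (i : 'I_n) (J : {set 'I_n}) : (forall j, j \in J -> (i < j)%N) ->
  ext_wedge (col i 1%:M) (ext_basis K J) = ext_basis K (i |: J).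
Proof.
move=> hJ; apply/ffunP => L; rewrite !ffunE.
have iJ : i \notin J by apply/negP => /hJ; rewrite ltnn.
case: (boolP (i \in L)) => iL.
  rewrite (bigD1 i) //= big1 ?addr0 => [|k /andP [_ ki]]; last first.
    by rewrite !mxE (negbTE ki) mulr0n mulr0 mul0r.
  rewrite !mxE eqxx mulr1n mulr1 ffunE.
  case: (eqVneq (L :\ i) J) => [LJ|LJ].
    have eL : L = i |: J by rewrite -LJ setD1K.
    rewrite eL; case: eqP => // _.
    have -> : [set k in i |: J | (k < i)%N] = set0.
      apply/setP => k; rewrite !inE; case: eqP => [->|_] /=; first by rewrite ltnn.
      by case: (boolP (k \in J)) => //= /hJ ik; rewrite ltnNge ltnW.
    by rewrite cards0 expr0 mul1r.
  rewrite mulr0; case: eqP => // e.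
  by rewrite e setU1K // eqxx in LJ.
rewrite big1 => [|k kL]; last first.
  rewrite !mxE (_ : (k == i) = false) ?mulr0n ?mulr0 ?mul0r //.
  by apply/negbTE/eqP => e; rewrite -e kL in iL.
by case: eqP => // e; rewrite e setU11 in iL.
Qed.

Lemma foldr_basis (r : seq 'I_n) : sorted (fun i j : 'I_n => (i < j)%N) r ->
  foldr (fun i acc => ext_wedge (col i 1%:M) acc) one r = ext_basis K [set x in r].
Proof.
elim: r => [|i r IH] /= hs.
  by congr (ext_basis K); apply/setP => x; rewrite !inE.
rewrite IH ?(path_sorted hs) // wedge_basis.
  by congr (ext_basis K); apply/setP => x; rewrite !inE.
move=> j; rewrite inE => jr.
have tr : transitive (fun i j : 'I_n => (i < j)%N) by move=> a b c; exact: ltn_trans.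
by have := order_path_min tr hs => /allP /(_ _ jr).
Qed.

Lemma enum_sorted (I : {set 'I_n}) : sorted (fun i j : 'I_n => (i < j)%N) (enum I).
Proof.
have tr : transitive (fun i j : 'I_n => (i < j)%N) by move=> a b c; exact: ltn_trans.
rewrite /enum_mem -enumT; apply: sorted_filter => //.
by have := iota_ltn_sorted 0 n; rewrite -val_enum_ord sorted_map.
Qed.

Lemma basis_enum (I : {set 'I_n}) :
  ext_basis K I = foldr (fun i acc => ext_wedge (col i 1%:M) acc) one (enum I).
Proof.
rewrite foldr_basis ?enum_sorted //; congr (ext_basis K).
by apply/setP => x; rewrite inE mem_enum.
Qed.

End Ext.

Section Rep.
Variables (K : fieldType) (n : nat) (A : algType K)
  (iota : 'rV[K]_n * 'cV[K]_n -> A) (hrel : clifford_rel iota)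
  (rho : A -> {ffun {set 'I_n} -> K^o} -> {ffun {set 'I_n} -> K^o})
  (hrho : spinor_rep iota rho).
Local Notation ext := {ffun {set 'I_n} -> K^o}.
Local Notation one := (ext_basis K (set0 : {set 'I_n})).

Lemma r1 s : rho 1 s = s. Proof. by case: hrho => [[]]. Qed.
Lemma rM a b s : rho (a * b) s = rho a (rho b s). Proof. by case: hrho => [[]]. Qed.
Lemma rDa a b s : rho (a + b) s = rho a s + rho b s. Proof. by case: hrho => [[]]. Qed.
Lemma rZa k a s : rho (k *: a) s = k *: rho a s. Proof. by case: hrho => [[]]. Qed.
Lemma rlin a k s1 s2 : rho a (k *: s1 + s2) = k *: rho a s1 + rho a s2.
Proof. by case: hrho => [[] *]. Qed.
Lemma rI v s : rho (iota v) s = rhoS_gen v s. Proof. by case: hrho. Qed.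

Lemma r0 a : rho a 0 = 0.
Proof.
have := rlin a 1 0 0; rewrite scaler0 addr0 scale1r.
by move=> /(congr1 (fun y => y - rho a 0)); rewrite subrr addrK => <-.
Qed.
Lemma rD a s1 s2 : rho a (s1 + s2) = rho a s1 + rho a s2.
Proof. by have := rlin a 1 s1 s2; rewrite !scale1r. Qed.
Lemma rZ a k s : rho a (k *: s) = k *: rho a s.
Proof. by rewrite -[k *: s]addr0 rlin r0 addr0. Qed.
Lemma rsum a (F : {set 'I_n} -> ext) : rho a (\sum_I F I) = \sum_I rho a (F I).
Proof. exact: (big_morph (rho a) (rD a) (r0 a)). Qed.
Lemma r0a s : rho 0 s = 0.
Proof. by rewrite -(scale0r (0 : A)) rZa scale0r. Qed.
Lemma rNa a s : rho (- a) s = - rho a s.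
Proof. by rewrite -scaleN1r rZa scaleN1r. Qed.
Lemma ralg k s : rho (k%:A) s = k *: s.
Proof. by rewrite rZa r1. Qed.

Lemma rho_w v s : rho (iota (0, v)) s = ext_wedge v s.
Proof. by rewrite rI /rhoS_gen /= ext_contr0 addr0. Qed.
Lemma rho_d_one d : rho (iota (d, 0)) one = 0.
Proof. by rewrite rI /rhoS_gen /= ext_wedge0 ext_contr_one addr0. Qed.

Lemma rho_one_transv dl w : pair_ev dl w = 0 ->
  rho (1 + iota (dl, 0) * iota (0, w)) one = one.
Proof.
move=> h0; rewrite rDa r1.
rewrite (comm_of (anti_dw hrel dl w)) h0 scale0r sub0r rNa rM rho_d_one r0.
by rewrite oppr0 addr0.
Qed.

Lemma rho_one_refl w f t : pair_ev f w = 1 ->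
  rho (iota (- (t^-1 *: f), t *: w) * iota (- f, w)) one = (- t^-1) *: one.
Proof.
move=> fw; rewrite rM (iota_split hrel (- f)) rDa rho_d_one add0r.
rewrite (iota_split hrel) rDa iota0Z // rZa -!rM sq0w // r0a scaler0 addr0.
rewrite (comm_of (anti_dw hrel _ w)) rDa ralg rNa rM rho_d_one r0 oppr0 addr0.
by rewrite pevNl pevZl fw mulr1.
Qed.

Lemma rho_ext (x : A) (g : 'M[K]_n) c :
  (forall v, x * iota (0, v) = iota (0, g *m v) * x) ->
  rho x one = c *: one -> forall s, rho x s = c *: ext_power g s.
Proof.
move=> h h1.
have hw v s : rho x (ext_wedge v s) = ext_wedge (g *m v) (rho x s).
  by rewrite -rho_w -rM h rM rho_w.
have hr r : rho x (foldr (fun i acc => ext_wedge (col i 1%:M) acc) one r) =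
            c *: foldr (fun i acc => ext_wedge (col i g) acc) one r.
  elim: r => [|i r IH] //=.
  by rewrite hw IH ext_wedgeZ col1 -colE.
move=> s; rewrite {1}(ext_decomp s) rsum /ext_power scaler_sumr.
by apply: eq_bigr => I _; rewrite rZ basis_enum hr !scalerA mulrC.
Qed.

End Rep.

Section Basis.
Variables (K : fieldType) (n : nat) (P : 'M[K]_n.+1) (hP : P \in unitmx).
Local Notation M := ('M[K]_n.+1).
Local Notation I := ('I_n.+1).

Definition wv (i : I) : 'cV[K]_n.+1 := P *m delta_mx i 0.
Definition fv (j : I) : 'rV[K]_n.+1 := delta_mx 0 j *m invmx P.

Lemma in_basisM (X Y : M) : in_basis P X *m in_basis P Y = in_basis P (X *m Y).
Proof. by rewrite /in_basis !mulmxA mulmxKV. Qed.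

Lemma in_basis_unit (X : M) : X \in unitmx -> in_basis P X \in unitmx.
Proof. by move=> uX; rewrite /in_basis !unitmx_mul hP unitmx_inv hP uX. Qed.

Lemma in_basis_r1 a (i j : I) :
  in_basis P (1%:M + a *: delta_mx i j) = 1%:M + a *: (wv i *m fv j).
Proof.
rewrite /in_basis mulmxDr mulmx1 mulmxDl mulmxV // -scalemxAr -scalemxAl.
by rewrite /wv /fv -(mul_delta_mx (0 : 'I_1)) !mulmxA.
Qed.

Lemma pev_fw (i j : I) : pair_ev (fv j) (wv i) = (j == i)%:R.
Proof.
rewrite /pair_ev /fv /wv mulmxA -(mulmxA _ (invmx P)) mulVmx // mulmx1.
case: (eqVneq j i) => [->|ji]; first by rewrite mul_delta_mx mxE !eqxx.
by rewrite mul_delta_mx_0 // mxE.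
Qed.

Lemma Levi_elem (i j : I) a v : i != j ->
  Levi (elem_transv P i j a) v = hyp_transv (- a *: fv j) (wv i) v.
Proof.
move=> ij; rewrite /elem_transv in_basis_r1 (Levi_r1 (b := - a)).
  rewrite /hyp_transv pevZl scalerA mulrC.
  by rewrite mulNr scaleNr opprK.
rewrite r1_mul pev_fw (_ : (j == i) = false) ?mulr0 ?addr0 ?addrN ?scale0r ?addr0 //.
by apply/negbTE; rewrite eq_sym.
Qed.

Lemma elem_valid1 (i j : I) a : i != j -> pair_ev (- a *: fv j) (wv i) = 0.
Proof.
move=> ij; rewrite pevZl pev_fw (_ : (j == i) = false) ?mulr0 //.
by apply/negbTE; rewrite eq_sym.
Qed.

Lemma Levi_line c v : c != 0 ->
  Levi (line_scale P ord0 (c ^+ 2)) v = sq_scaling (wv ord0) (fv ord0) c v.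
Proof.
move=> c0; rewrite /line_scale in_basis_r1 (Levi_r1 (b := c ^- 2 - 1)) //.
rewrite r1_mul pev_fw eqxx mulr1.
have -> : c ^+ 2 - 1 + (c ^- 2 - 1) + (c ^+ 2 - 1) * (c ^- 2 - 1) = 0.
  by field.
by rewrite scale0r addr0.
Qed.

Lemma elem_unit (i j : I) a : i != j -> elem_transv P i j a \in unitmx.
Proof.
by move=> ij; apply: in_basis_unit; rewrite unitmxE (det_trv _ ij) unitr1.
Qed.

Lemma elem_prodE s : elem_prod P s = in_basis P (trs s).
Proof.
elim: s => [|p s IH] /=; first by rewrite /in_basis mulmx1 mulmxV.
by rewrite IH /elem_transv in_basisM.
Qed.

Lemma elem_prod_unit s : elem_valid s -> elem_prod P s \in unitmx.
Proof.
by move=> vs; rewrite elem_prodE; apply: in_basis_unit; rewrite unitmxE det_trs // unitr1.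
Qed.

Definition mkT (p : I * I * K) : hyp_factor K n.+1 :=
  HTransv (- p.2 *: fv p.1.2) (wv p.1.1).

Lemma Levi_elem_prod s v : elem_valid s ->
  Levi (elem_prod P s) v = factors_map [seq mkT p | p <- s] v.
Proof.
elim: s v => [|p s IH] v /=; first by rewrite /Levi invmx1 mulmx1 mul1mx; case: v.
case/andP => h1 h2; rewrite LeviM ?elem_unit ?elem_prod_unit // IH //.
by rewrite Levi_elem.
Qed.

End Basis.

Section Dpair.
Variables (K : fieldType) (n : nat).

Lemma Dpair_eq (j : 'I_n.+1) (t : K) : j != ord0 -> t != 0 ->
  1%:M + (t - 1) *: delta_mx j j + (t^-1 - 1) *: delta_mx ord0 ord0 =
  tr j ord0 (t - 1) *m (tr ord0 j 1 *m (tr j ord0 (t^-1 - 1) *m (tr ord0 j (- t) *m 1%:M))).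
Proof.
move=> j0 t0; have j0' : (ord0 == j) = false by apply/negbTE; rewrite eq_sym.
apply/matrixP => r s; rewrite !trE !mxE.
case: (eqVneq r j) => [er|rj]; [subst r | case: (eqVneq r ord0) => [er|r0]; [subst r|]];
  (case: (eqVneq s j) => [es|sj]; [subst s | case: (eqVneq s ord0) => [es|s0]; [subst s|]]);
  rewrite ?eqxx ?(negbTE j0) ?j0' ?(negbTE rj) ?(negbTE r0) ?(negbTE sj) ?(negbTE s0)
    ?(eq_sym ord0 s) ?(negbTE s0) /=.
all: by field.
Qed.

End Dpair.

Section ClFin.
Variables (K : fieldType) (n : nat) (A : algType K)
  (iota : 'rV[K]_n * 'cV[K]_n -> A) (hrel : clifford_rel iota)
  (cj : A -> A) (hcj : clifford_conjugation iota cj)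
  (rho : A -> {ffun {set 'I_n} -> K^o} -> {ffun {set 'I_n} -> K^o})
  (hrho : spinor_rep iota rho).

Lemma frep_cons F fs : factors_rep iota (F :: fs) = factor_rep iota F * factors_rep iota fs.
Proof. by rewrite /factors_rep big_cons. Qed.
Lemma frep_nil : factors_rep iota [::] = 1.
Proof. by rewrite /factors_rep big_nil. Qed.

Lemma factor_intertw F v : factor_valid F ->
  factor_rep iota F * iota (0, v) = iota (factor_map F (0, v)) * factor_rep iota F
  /\ (factor_map F (0, v)).1 = 0.
Proof.
case: F => [dl w | w f t] /= h; split.
- rewrite transv_intertw //; congr (iota _ * _).
  by rewrite /hyp_transv /= pev0l scale0r addr0.
- exact: transv_fst.
- by case: h => fw t0; exact: scale_intertw.
- exact: scale_fst.
Qed.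

Lemma fs_intertw fs v : all_factors_valid fs ->
  factors_rep iota fs * iota (0, v) = iota (factors_map fs (0, v)) * factors_rep iota fs
  /\ (factors_map fs (0, v)).1 = 0.
Proof.
elim: fs => [|F fs IH] /=; first by rewrite frep_nil mul1r mulr1.
case=> hF hfs; have [e1 e2] := IH hfs.
have ez : factors_map fs (0, v) = (0, (factors_map fs (0, v)).2).
  by rewrite {1}(surjective_pairing (factors_map fs (0, v))) e2.
have [f1 f2] := factor_intertw (factors_map fs (0, v)).2 hF.
rewrite frep_cons -mulrA e1 mulrA {1}ez f1 -mulrA ez; split => //.
Qed.

Lemma factor_unitary F : factor_valid F ->
  clifford_even iota (factor_rep iota F) /\ unit2 cj (factor_rep iota F).
Proof.
case: F => [dl w | w f t] /= h.
  by split; [exact: even_transv | exact: unit2_transv].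
case: h => fw t0; split; first exact: even_refl.
apply: unit2_refl => //; rewrite /hypQ /=.
  by rewrite pevNl pevZl pevZr fw mulr1 mulVf.
by rewrite pevNl fw.
Qed.

Lemma fs_unitary fs : all_factors_valid fs ->
  even_unitary iota cj (factors_rep iota fs).
Proof.
have gen : all_factors_valid fs ->
    clifford_even iota (factors_rep iota fs) /\ unit2 cj (factors_rep iota fs).
  elim: fs => [|F fs IH] /=.
    by rewrite frep_nil; split; [exact: even1 | split; rewrite (cj1 hcj) mulr1].
  case=> hF hfs; have [h1 h2] := IH hfs; have [h3 h4] := factor_unitary hF.
  rewrite frep_cons; split; [exact: evenM h3 h1 | exact: (@unit2M K n A iota cj hcj _ _ h4 h2)].
by move=> /gen [h1 [h2 h3]].
Qed.

Lemma rho_one_fs fs : all_factors_valid fs -> all (fun F => ~~ is_scale F) fs ->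
  rho (factors_rep iota fs) (ext_basis K set0) = ext_basis K set0.
Proof.
elim: fs => [|F fs IH] /=; first by rewrite frep_nil (r1 hrho).
case=> hF hfs /andP [nF nfs]; rewrite frep_cons (rM hrho) IH //.
by case: F hF nF => // dl w /= h _; exact: (rho_one_transv hrel hrho).
Qed.

End ClFin.

Lemma factors_map_cat (K : fieldType) n (l1 l2 : seq (hyp_factor K n)) v :
  factors_map (l1 ++ l2) v = factors_map l1 (factors_map l2 v).
Proof. by elim: l1 => [|F l IH] //=; rewrite IH. Qed.

Lemma Levi4 (K : fieldType) n (A1 A2 A3 A4 : 'M[K]_n.+1) v :
  A1 \in unitmx -> A2 \in unitmx -> A3 \in unitmx -> A4 \in unitmx ->
  Levi (A1 *m (A2 *m (A3 *m A4))) v = Levi A1 (Levi A2 (Levi A3 (Levi A4 v))).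
Proof.
move=> u1 u2 u3 u4.
by rewrite !LeviM // ?unitmx_mul ?u1 ?u2 ?u3 ?u4.
Qed.

Lemma gen_fs (K : fieldType) n (l : seq ('I_n.+1 * 'I_n.+1 * K)) (P : 'M[K]_n.+1) :
  P \in unitmx -> elem_valid l -> gen_by_transv (factors_map [seq mkT P p | p <- l]).
Proof.
move=> hP; elim: l => [|p l IH] /=; first by move=> _; exact: gbt_id.
case/andP => h1 h2; apply: gbt_comp; last exact: IH.
exact/gbt_transv/elem_valid1.
Qed.

Lemma decomp (K : fieldType) n (P g : 'M[K]_n.+1) : P \in unitmx -> g \in unitmx ->
  exists s, elem_valid s /\ g = elem_prod P s *m line_scale P ord0 (\det g).
Proof.
move=> hP ug; set N := invmx P *m g *m P.
have uN : N \in unitmx by rewrite !unitmx_mul unitmx_inv hP ug.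
have dP : \det P != 0 by rewrite -unitfE -unitmxE.
have dN : \det N = \det g by rewrite !det_mulmx det_inv mulrAC mulVf ?mul1r.
have [s [vs eN]] := factor uN.
exists s; split => //.
rewrite (elem_prodE hP) /line_scale (in_basisM hP) -dN (_ : trs s *m _ = N); last by rewrite [RHS]eN.
by rewrite /in_basis /N !mulmxA mulmxV // mul1mx -mulmxA mulmxV // mulmx1.
Qed.

Unset Implicit Arguments. Set Strict Implicit.
Theorem mainTheorem3
  (K : fieldType) (hK : (2%:R : K) != 0) (m : nat)
  (* the Clifford algebra Cl(Hyp(W)) with generator map iota *)
  (A : algType K) (iota : 'rV[K]_(m.+2) * 'cV[K]_(m.+2) -> A)
  (hCl : clifford_universal iota)
  (* Clifford conjugation *)
  (cj : A -> A) (hcj : clifford_conjugation iota cj)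
  (* the exterior-model representation rho_S on S = /\ W *)
  (rhoS : A -> {ffun {set 'I_(m.+2)} -> K^o} -> {ffun {set 'I_(m.+2)} -> K^o})
  (hrho : spinor_rep iota rhoS)
  (* a chosen basis e_1, ..., e_n (columns of P) *)
  (P : 'M[K]_(m.+2)) (hP : P \in unitmx) :
  (* main claim *)
  (forall (g : 'M[K]_(m.+2)) (u : K),
     g \in unitmx -> u != 0 -> \det g = u ^+ 2 ->
     (exists (sA sB : seq ('I_(m.+2) * 'I_(m.+2) * K)) (t : 'I_(m.+2) -> K),
        [/\ elem_valid sA, elem_valid sB,
            (forall j, j != ord0 -> t j != 0) &
            g = elem_prod P sA *m line_scale P ord0 (u ^+ 2)
                  *m diag_prod P ord0 t *m elem_prod P sB])
     /\
     (exists fs : seq (hyp_factor K (m.+2)),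
        [/\ all_factors_valid fs,
            count (@is_scale K (m.+2)) fs = 1%N,
            (forall v, Levi g v = factors_map fs v),
            even_unitary iota cj (factors_rep iota fs) &
            (forall s, rhoS (factors_rep iota fs) s = (- u^-1) *: ext_power g s)]))
  /\
  (* Lambda of the elementary factors *)
  (forall (i j : 'I_(m.+2)) (a : K), i != j ->
     exists dl w, pair_ev dl w = 0 /\
       forall v, Levi (elem_transv P i j a) v = hyp_transv dl w v)
  /\
  (forall (j : 'I_(m.+2)) (t : K), j != ord0 -> t != 0 ->
     exists fs : seq ('rV[K]_(m.+2) * 'cV[K]_(m.+2)),
       [/\ size fs = 4%N, all (fun p => pair_ev p.1 p.2 == 0) fs &
           forall v, Levi (diag_pair P ord0 j t) v =
                     factors_map [seq HTransv p.1 p.2 | p <- fs] v])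
  /\
  (forall c : K, c != 0 ->
     exists (w : 'cV[K]_(m.+2)) (f : 'rV[K]_(m.+2)), pair_ev f w = 1 /\
       forall v, Levi (line_scale P ord0 (c ^+ 2)) v = sq_scaling w f c v)
  /\
  (* consequence: Lambda(SL(W)) lies in the group generated by transvections *)
  (forall g : 'M[K]_(m.+2), g \in unitmx -> \det g = 1 ->
     gen_by_transv (Levi g)).
Proof.
have hrel : clifford_rel iota by case: hCl.
split.
  move=> g u ug u0 dg.
  have [s [vs eg]] := decomp hP ug; rewrite dg in eg.
  have Lunit : line_scale P ord0 (u ^+ 2) \in unitmx.
    by apply: in_basis_unit => //; rewrite unitmxE (@det_Dg K m.+1) unitfE expf_neq0.
  split.
    exists s, [::], (fun _ => 1); split => //; first by move=> *; exact: oner_neq0.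
    have d1 : diag_prod P ord0 (fun _ => 1) = 1%:M.
      rewrite /diag_prod; elim: [seq _ <- _ | _] => //= j l ->.
      by rewrite mulmx1 /diag_pair /in_basis invr1 subrr !scale0r !addr0 mulmx1 mulmxV.
    by rewrite {1}eg d1 /= !mulmx1.
  set fs := [seq mkT P p | p <- s] ++ [:: HScale (wv P ord0) (fv P ord0) u].
  have av : all_factors_valid fs.
    rewrite /fs; elim: (s) vs => [|p s' IH] /=.
      by move=> _; split => //; split => //; rewrite pev_fw // eqxx.
    by case/andP => h1 h2; split; [exact: elem_valid1 | exact: IH].
  have Lg : forall v, Levi g v = factors_map fs v.
    move=> v; rewrite eg LeviM ?elem_prod_unit // Levi_elem_prod // factors_map_cat /=.
    by rewrite Levi_line.
  exists fs; split => //.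
  - rewrite /fs count_cat /=.
    have -> : count (@is_scale K m.+2) [seq mkT P p | p <- s] = 0%N by elim: (s).
    by [].
  - exact: fs_unitary.
  - apply: (rho_ext hrho (g := g)).
      move=> v; have [e1 _] := fs_intertw hrel v av; rewrite e1.
      by congr (iota _ * _); rewrite -Lg /Levi /= mul0mx.
    rewrite /fs /factors_rep big_cat big_seq1 /= (rM hrho) (rho_one_refl hrel hrho) ?pev_fw ?eqxx //.
    rewrite (rZ hrho) -/(factors_rep iota _) (rho_one_fs hrel hrho) //.
      by elim: (s) vs => //= p s' IH /andP [h1 h2]; split; [exact: elem_valid1 | exact: IH].
    by elim: (s).
split.
  move=> i j a ij; exists (- a *: fv P j), (wv P i); split; first exact: elem_valid1.
  by move=> v; exact: Levi_elem.
split.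
  move=> j t j0 t0; have j0' : ord0 != j by rewrite eq_sym.
  exists [:: (- (t - 1) *: fv P ord0, wv P j); (- 1 *: fv P j, wv P ord0);
             (- (t^-1 - 1) *: fv P ord0, wv P j); (- - t *: fv P j, wv P ord0)].
  split => //.
    by rewrite /= !(elem_valid1 hP) ?eqxx.
  move=> v; rewrite /diag_pair (Dpair_eq j0 t0) mulmx1 -!(in_basisM hP).
  rewrite (Levi4 _ (elem_unit hP (t - 1) j0) (elem_unit hP 1 j0')
                  (elem_unit hP (t^-1 - 1) j0) (elem_unit hP (- t) j0')).
  by rewrite /= !(Levi_elem hP).
split.
  move=> c c0; exists (wv P ord0), (fv P ord0); split; first by rewrite pev_fw // eqxx.
  by move=> v; exact: Levi_line.
move=> g ug dg.
have [s [vs eg]] := decomp hP ug; rewrite dg in eg.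
have -> : Levi g = factors_map [seq mkT P p | p <- s].
  apply: functional_extensionality => v.
  rewrite eg /line_scale subrr scale0r addr0 /in_basis mulmx1 mulmxV // mulmx1.
  exact: Levi_elem_prod.
exact: gen_fs.
Qed.
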